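(* Let $V$ be a finite-dimensional real vector space and let $X:\lambda\to\mathrm{End}(V)$ be a map such that for all $\alpha,\beta\in\lambda$: $X(\alpha)X(\beta)-X(\beta)X(\alpha)=0$ if $(\alpha|\beta)=0$, and $X(\alpha)X(\beta)+X(\beta)X(\alpha)=X(\alpha\pm\beta)$ if $(\alpha|\beta)=\mp1$ and $\alpha\pm\beta\in\lambda$. Then the assignment $X_i\mapsto X(\alpha_i)\otimes\Gamma(\alpha_i)\in\mathrm{End}(V\otimes S)$ extends to a finite-dimensional representation $\sigma$ of $\mathfrak k$ on $V\otimes S$.
   Context: Let $A=(a_{ij})_{1\le i,j\le n}$ be a symmetrizable simply laced generalized Cartan matrix (off-diagonal entries $0$ or $-1$); the Dynkin diagram has an edge between $i\ne j$ iff $a_{ij}=-1$. Let $\mathfrak g$ be the split real Kac–Moody algebra of $A$ with Chevalley generators $e_i,f_i$, Cartan subalgebra $\mathfrak h$ (from a real realization), simple roots $\alpha_1,\dots,\alpha_n\in\mathfrak h^*$, and let $(\cdot|\cdot)$ be the nondegenerate invariant symmetric bilinear form induced on $\mathfrak h^*$, with $(\alpha_i|\alpha_j)=a_{ij}$. Let $\mathfrak k$ be the fixed-point subalgebra of the Chevalley involution ($e_i\mapsto -f_i$, $f_i\mapsto-e_i$, $h\mapsto -h$), with Berman generators $X_i=e_i-f_i$; $\mathfrak k$ is presented by generators $X_1,\dots,X_n$ and relations $[X_i,[X_i,X_j]]=-X_j$ if $a_{ij}=-1$, $[X_i,X_j]=0$ if $a_{ij}=0$. Let $\lambda$ be the set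 of real roots consisting of the simple roots $\alpha_1,\dots,\alpha_n$ together with all $\alpha_i+\alpha_j$ for $i,j$ forming an edge of the Dynkin diagram. A generalized spin representation is a representation $\rho$ of $\mathfrak k$ with $\rho(X_i)^2=-\frac14\mathrm{id}$ for all $i$. Fix a finite-dimensional real vector space $S$ with positive definite inner product and orthonormal basis $f_1,\dots,f_l$, and a generalized spin representation $\rho:\mathfrak k\to\mathrm{End}(S)$ whose values $\rho(X_i)$ are anti-symmetric real matrices with respect to this basis (such exist, e.g. by realifying the generalized spin representations with compact image constructed by Hainke–Köhl–Levy); put $\Gamma(\alpha_i):=2\rho(X_i)$. *)

(* Defs.v *)
From HB Require Import structures.
From mathcomp Require Import all_boot all_order all_algebra.
From mathcomp Require Import mxtens.
From mathcomp Require Import reals.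

Set Implicit Arguments.
Unset Strict Implicit.
Unset Printing Implicit Defensive.

Import Order.TTheory GRing.Theory Num.Theory.
Local Open Scope ring_scope.

(* A simply laced generalized Cartan matrix: a_ii = 2, off-diagonal entries
   are 0 or -1, and a_ij = 0 <-> a_ji = 0 (GCM axiom).  (Such a matrix is
   automatically symmetric, hence symmetrizable.) *)
Definition simply_laced_GCM (n : nat) (A : 'M[int]_n) : Prop :=
  (forall i, A i i = 2%:Z) /\
  (forall i j, i != j -> A i j = 0 \/ A i j = -1) /\
  (forall i j, A i j = 0 <-> A j i = 0).

(* Elements of the root lattice  sum_i c_i alpha_i  are encoded by their
   coefficient row vectors c (the simple roots are linearly independent). *)
Definition simple_root (n : nat) (i : 'I_n) : 'rV[int]_n := delta_mx 0 i.

(* The invariant form on the root lattice: (alpha_i | alpha_j) = a_ij. *)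
Definition rform (n : nat) (A : 'M[int]_n) (a b : 'rV[int]_n) : int :=
  (a *m A *m b^T) 0 0.

Definition in_lambda (n : nat) (A : 'M[int]_n) (a : 'rV[int]_n) : Prop :=
  (exists i, a = simple_root i) \/
  (exists i j, i != j /\ A i j = -1 /\ a = simple_root i + simple_root j).

Definition comm (R : pzRingType) (d : nat) (P Q : 'M[R]_d) : 'M[R]_d :=
  P *m Q - Q *m P.

(* The defining relations (Berman presentation) of k for a family
   Y_i = image of the generator X_i in End(R^d):
     [Y_i,[Y_i,Y_j]] = -Y_j  if a_ij = -1,   [Y_i,Y_j] = 0  if a_ij = 0
   (for i <> j).  Since k is presented by generators X_i and exactly these
   relations, a family Y satisfies them iff the assignment X_i |-> Y_i
   extends (uniquely) to a Lie algebra representation of k on R^d. *)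
Definition k_relations (R : pzRingType) (n : nat) (A : 'M[int]_n) (d : nat)
    (Y : 'I_n -> 'M[R]_d) : Prop :=
  forall i j, i != j ->
    (A i j = -1 -> comm (Y i) (comm (Y i) (Y j)) = - Y j) /\
    (A i j = 0 -> comm (Y i) (Y j) = 0).

Definition extends_to_k_rep (R : pzRingType) (n : nat) (A : 'M[int]_n) (d : nat)
    (Y : 'I_n -> 'M[R]_d) : Prop := k_relations A Y.

Definition gen_spin_rep_antisym (R : realType) (n : nat) (A : 'M[int]_n) (l : nat)
    (rho : 'I_n -> 'M[R]_l) : Prop :=
  extends_to_k_rep A rho /\
  (forall i, rho i *m rho i = - (4%:R^-1) *: 1%:M) /\
  (forall i, (rho i)^T = - rho i).

(* Main.v *)
Require Import Defs.
From HB Require Import structures.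
From mathcomp Require Import all_boot all_order all_algebra.
From mathcomp Require Import mxtens.
From mathcomp Require Import reals ring.
Import GRing.Theory Num.Theory.
Local Open Scope ring_scope.

Lemma anti_lemma (R : numFieldType) l (ri rj : 'M[R]_l) :
  ri *m ri = - (4%:R^-1) *: 1%:M ->
  comm ri (comm ri rj) = - rj ->
  rj *m ri = - (ri *m rj).
Proof.
move=> Hii H; rewrite /comm in H.
set u := ri *m rj *m ri.
have E1 : ri *m (ri *m rj) = - (4%:R^-1) *: rj by rewrite mulmxA Hii -scalemxAl mul1mx.
have E2 : rj *m ri *m ri = - (4%:R^-1) *: rj by rewrite -mulmxA Hii -scalemxAr mulmx1.
have E3 : ri *m (rj *m ri) = u by rewrite mulmxA.
rewrite mulmxBr mulmxBl E1 E2 E3 -/u in H.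
set w := - (4%:R^-1) *: rj in H.
have H2 : w - u = - (2%:R^-1 *: rj).
  rewrite -scalerN -H opprB -[(w - u) + (w - u)]mulr2n -scaler_nat scalerA mulVf ?scale1r //.
  by rewrite pnatr_eq0.
have Hu : u = 4%:R^-1 *: rj.
  have -> : u = w - (w - u) by rewrite opprB addrC subrK.
  rewrite H2 opprK /w -scalerDl; congr (_ *: _).
  have h4 : (4%:R : R) != 0 by rewrite pnatr_eq0.
  have h2 : (2%:R : R) != 0 by rewrite pnatr_eq0.
  by field.
have H3 : - (4%:R^-1) *: (ri *m rj) = 4%:R^-1 *: (rj *m ri).
  by rewrite [RHS]scalemxAl -Hu /u -(mulmxA (ri *m rj) ri ri) Hii -scalemxAr mulmx1.
have h4 : (4%:R : R) != 0 by rewrite pnatr_eq0.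
by rewrite -[rj *m ri]scale1r -(mulfV h4) -scalerA -H3 scalerA mulrN mulfV // scaleN1r.
Qed.

Lemma rform_sr n (A : 'M[int]_n) i j : rform A (simple_root i) (simple_root j) = A i j.
Proof. by rewrite /rform /simple_root trmx_delta -rowE -colE !mxE. Qed.

Lemma rformDl n (A : 'M[int]_n) a b c : rform A (a + b) c = rform A a c + rform A b c.
Proof. by rewrite /rform !mulmxDl mxE. Qed.

Section Tens.
Variable R : pzRingType.
Lemma tensmxDl m n p q (A B : 'M[R]_(m, n)) (C : 'M[R]_(p, q)) :
  (A + B) *t C = A *t C + B *t C.
Proof. by apply/matrixP=> i j; rewrite !mxE mulrDl. Qed.
Lemma tensmxNl m n p q (A : 'M[R]_(m, n)) (C : 'M[R]_(p, q)) :
  (- A) *t C = - (A *t C).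
Proof. by apply/matrixP=> i j; rewrite !mxE mulNr. Qed.
Lemma tensmxNr m n p q (A : 'M[R]_(m, n)) (C : 'M[R]_(p, q)) :
  A *t (- C) = - (A *t C).
Proof. by apply/matrixP=> i j; rewrite !mxE mulrN. Qed.
End Tens.

Theorem proposition4p1 (R : realType) (n : nat) (A : 'M[int]_n)
    (l : nat) (rho : 'I_n -> 'M[R]_l) (m : nat) (X : 'rV[int]_n -> 'M[R]_m) :
  simply_laced_GCM A ->
  gen_spin_rep_antisym A rho ->
  (forall a b, in_lambda A a -> in_lambda A b ->
     (rform A a b = 0 -> X a *m X b - X b *m X a = 0) /\
     (rform A a b = -1 -> in_lambda A (a + b) ->
        X a *m X b + X b *m X a = X (a + b)) /\
     (rform A a b = 1 -> in_lambda A (a - b) ->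
        X a *m X b + X b *m X a = X (a - b))) ->
  extends_to_k_rep A
    (fun i : 'I_n => X (simple_root i) *t (2%:R *: rho i) : 'M[R]_(m * l)).
Proof.
move=> [Hd [Hoff Hsym]] [Hrho [Hsq _]] HX i j ij.
have lam : forall k, in_lambda A (simple_root k) by move=> k; left; exists k.
set G := fun k => 2%:R *: rho k : 'M[R]_l.
have GE : forall a b, G a *m G b = (2%:R * 2%:R) *: (rho a *m rho b).
  by move=> a b; rewrite /G -scalemxAl -scalemxAr scalerA.
have ji : j != i by rewrite eq_sym.
have tD := @tensmxDl R m m l l; have tN1 := @tensmxNl R m m l l; have tN2 := @tensmxNr R m m l l.
split.
- move=> Aij.
  have Aji : A j i = -1.
    case: (Hoff j i ji) => // /Hsym; rewrite Aij => /eqP; by [].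
  have lij : in_lambda A (simple_root i + simple_root j).
    by right; exists i, j.
  have Hx1 := (HX _ _ (lam i) (lam j)).2.1 (etrans (rform_sr _ A i j) Aij) lij.
  have r2 : rform A (simple_root i + simple_root j) (simple_root i) = 1.
    by rewrite rformDl !rform_sr Hd Aji.
  have ed : simple_root i + simple_root j - simple_root i = simple_root j.
    by rewrite addrC addKr.
  have Hx2 := (HX _ _ lij (lam i)).2.2 r2; rewrite ed in Hx2.
  have Hx2' := Hx2 (lam j).
  have antir := anti_lemma _ _ _ _ (Hsq i) ((Hrho i j ij).1 Aij).
  have antiG : G j *m G i = - (G i *m G j) by rewrite !GE antir scalerN.
  have GG : G i *m G i = - 1%:M.
    rewrite GE Hsq scalerA -scaleN1r; congr (_ *: _).
    by rewrite mulrN -natrM mulfV // pnatr_eq0.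
  have P1 : G i *m (G i *m G j) = - G j by rewrite mulmxA GG mulNmx mul1mx.
  have P2 : G i *m G j *m G i = G j.
    have -> : G i *m G j = - (G j *m G i) by rewrite antiG opprK.
    by rewrite mulNmx -mulmxA GG mulmxN mulmx1 opprK.
  have C1 : comm (X (simple_root i) *t G i) (X (simple_root j) *t G j)
     = X (simple_root i + simple_root j) *t (G i *m G j).
    by rewrite /comm !tensmx_mul antiG tN2 opprK -Hx1 tD.
  by rewrite -/G C1 /comm !tensmx_mul P1 P2 tN2 -Hx2' tD opprD addrC.
- move=> Aij.
  have H0 := (HX _ _ (lam i) (lam j)).1 (etrans (rform_sr _ A i j) Aij).
  have Hr := (Hrho i j ij).2 Aij; rewrite /comm in Hr.
  have cG : G j *m G i = G i *m G j.
    by rewrite !GE; move/eqP: Hr; rewrite subr_eq0 => /eqP ->.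
  rewrite -/G /comm !tensmx_mul cG.
  have -> : (0 : 'M[R]_(m * l)) = (X (simple_root i) *m X (simple_root j)
      - X (simple_root j) *m X (simple_root i)) *t (G i *m G j).
    by rewrite H0; apply/matrixP => a b; rewrite !mxE mul0r.
  by rewrite tD tN1.
Qed.
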